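(* Let $n$ be a positive integer and $m = n^2+1$. Let $Q_n = (a_{i,j})_{1\le i,j\le n}$ be the $n\times n$ matrix with entries in $\mathbb{Z}/m\mathbb{Z}$ given by $a_{i,j} = j + (i-1)n$, and let $\rho(Q_n)$ be the $n\times n$ matrix whose $(i,j)$ entry is $a_{j,n-i+1}$. If $\varphi:\mathbb{Z}/m\mathbb{Z}\to\{0,1,-1\}$ is a completely multiplicative function, then $\varphi(\rho(Q_n)) = \varphi(n)\varphi(Q_n)$, where for a matrix $A=(b_{i,j})$ we write $\varphi(A) = (\varphi(b_{i,j}))$.
   Context: A function $\varphi$ on $\mathbb{Z}/m\mathbb{Z}$ is completely multiplicative if $\varphi(ab)=\varphi(a)\varphi(b)$ for all $a,b$. $\varphi$ is applied to matrices entrywise. *)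

(* Defs.v *)
From HB Require Import structures.
From mathcomp Require Import all_boot all_order all_algebra.
Set Implicit Arguments. Unset Strict Implicit. Unset Printing Implicit Defensive.
Import GRing.Theory Num.Theory.
Local Open Scope ring_scope.

(* Z/mZ for m = n^2 + 1 >= 2 is 'Z_(n^2+1).  Indices are 0-based: row i, column j
   of type 'I_n correspond to 1-based (i+1, j+1). *)

Definition Qmx (n : nat) : 'M['Z_(n ^ 2 + 1)]_n :=
  \matrix_(i < n, j < n) ((j.+1 + i * n)%N)%:R.

Definition rho (R : Type) (n : nat) (A : 'M[R]_n) : 'M[R]_n :=
  \matrix_(i < n, j < n) A j (rev_ord i).

Definition completely_multiplicative (m : nat) (phi : 'Z_m -> int) : Prop :=
  forall a b : 'Z_m, phi (a * b) = phi a * phi b.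

Definition values_in_0_pm1 (m : nat) (phi : 'Z_m -> int) : Prop :=
  forall x : 'Z_m, phi x \in [:: 0; 1; -1].

(* Main.v *)
Require Import Defs.
From HB Require Import structures.
From mathcomp Require Import all_boot all_order all_algebra.
From mathcomp Require Import zify.
Import GRing.Theory Num.Theory.
Local Open Scope ring_scope.

Theorem corollary2 (n : nat) (hn : (0 < n)%N)
  (phi : 'Z_(n ^ 2 + 1) -> int)
  (hval : values_in_0_pm1 phi) (hmul : completely_multiplicative phi) :
  map_mx phi (rho (Qmx n)) = phi (n%:R) *: map_mx phi (Qmx n).
Proof.
have m0 : ((n ^ 2 + 1)%N%:R : 'Z_(n ^ 2 + 1)) = 0.
  apply: val_inj => /=; rewrite Zp_nat /= Zp_cast ?modnn //.
  by rewrite -[1%N]/(0 + 1)%N ltn_add2r expn_gt0 hn.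
apply/matrixP => i j; rewrite /rho /Qmx !mxE -hmul; congr (phi _).
rewrite -natrM.
have -> : (n * (j.+1 + i * n) = ((rev_ord i).+1 + j * n) + i * (n ^ 2 + 1))%N.
  have hi := ltn_ord i; rewrite /=.
  nia.
by rewrite [in RHS]natrD [in RHS]natrM m0 mulr0 addr0.
Qed.
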